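(* Let $X$ be an $n$-dimensional polyhedral normed space and let $Y \subseteq X$ be a subspace of dimension $k$, where $1 \leq k \leq n-1$. Let $l$ be the minimal number of pairs on which a Chalmers–Metcalf operator for $Y$ can be supported and let $m$ be the minimal number of norming pairs that a minimal projection from $X$ onto $Y$ can have. Then $k(n-k)-m+1 \leq \dim \mathcal{P}_{\min}(X, Y) \leq k(n-k)-l+1$.
   Context: A normed space $X=(\mathbb{R}^n,\|\cdot\|)$ is polyhedral if its unit ball is a convex polytope. A projection onto $Y$ is a linear $P:X\to Y$ with $P|_Y=\mathrm{id}_Y$; $\lambda(Y,X)$ is the infimum of the operator norms of projections and $\mathcal{P}_{\min}(X,Y)$ the set of projections of norm $\lambda(Y,X)$ (minimal projections); $\dim\mathcal{P}_{\min}(X,Y)$ is the affine dimension of this convex subset of $\mathcal{L}(X,X)$. A norming pair for a projection $P$ is a pair $(x,f)\in \mathrm{ext}\,B_X\times \mathrm{ext}\,B_{X^*}$ with $f(P(x))=\|P\|$. For $x\in X$, $f\in X^*$, $x\otimes f$ is the operator $z\mapsto f(z)x$. A Chalmers–Metcalf operator for $Y$ is an operator $T=\sum_{i=1}^{l}\alpha_i x_i\otimes f_i:X\to X$ with $(x_i,f_i)\in\mathrm{ext}\,B_X\times\mathrm{ext}\,B_{X^*}$, $\alpha_i>0$, $\sum_i\alpha_i=1$, $T(Y)\subseteq Y$, and $f_i(P_0(x_i))=\|P_0\|=\lambda(Y,X)$ for all $i$ and some fixed minimal projection $P_0$; it is said to be supported on the $l$ pairs $(x_i,f_i)$. *)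

(* Defs.v *)
(* X = 'rV[R]_n (row vectors), operators = 'M[R]_n acting on
   the right (x |-> x *m A), functionals = 'cV[R]_n (f(x) = (x *m f) 0 0). *)
From HB Require Import structures.
From mathcomp Require Import all_boot all_order all_algebra.
From mathcomp Require Import all_classical all_reals.
Set Implicit Arguments. Unset Strict Implicit. Unset Printing Implicit Defensive.
Import Order.TTheory GRing.Theory Num.Theory.
Local Open Scope ring_scope.
Local Open Scope classical_set_scope.

Section Defs.
Variables (R : realType) (n : nat).
Notation vec := 'rV[R]_n.
Notation fct := 'cV[R]_n.
Notation op := 'M[R]_n.

Definition is_norm (N : vec -> R) : Prop :=
  [/\ forall x y, N (x + y) <= N x + N y,
      forall (a : R) x, N (a *: x) = `|a| * N x
    & forall x, N x = 0 -> x = 0].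

Definition in_conv_hull (s : seq vec) (x : vec) : Prop :=
  exists w : 'I_(size s) -> R,
    [/\ forall i, 0 <= w i, (\sum_i w i) = 1
      & x = \sum_i w i *: s`_(nat_of_ord i)].

Definition polyhedral (N : vec -> R) : Prop :=
  exists s : seq vec, forall x, N x <= 1 <-> in_conv_hull s x.

Definition unit_ball (N : vec -> R) : set vec := [set x | N x <= 1].

Definition fapp (f : fct) (x : vec) : R := (x *m f) 0 0.

Definition dual_ball (N : vec -> R) : set fct :=
  [set f | forall x, N x <= 1 -> `|fapp f x| <= 1].

Definition extreme {V : lmodType R} (C : set V) (x : V) : Prop :=
  C x /\ forall y z (t : R), C y -> C z -> 0 < t < 1 ->
    x = t *: y + (1 - t) *: z -> y = z.

Definition opnorm (N : vec -> R) (A : op) : R :=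
  sup [set N (x *m A) | x in unit_ball N].

(* P is a projection onto Y (Y given by its row space) *)
Definition is_proj (Y : op) (P : op) : Prop :=
  (P <= Y)%MS /\ forall x : vec, (x <= Y)%MS -> x *m P = x.

Definition lambda (N : vec -> R) (Y : op) : R :=
  inf [set opnorm N P | P in is_proj Y].

Definition Pmin (N : vec -> R) (Y : op) : set op :=
  [set P | is_proj Y P /\ opnorm N P = lambda N Y].

(* the rank-one operator x (x) f : z |-> f(z) x *)
Definition tens (x : vec) (f : fct) : op := f *m x.

Definition norming_pair (N : vec -> R) (P : op) (x : vec) (f : fct) : Prop :=
  [/\ extreme (unit_ball N) x, extreme (dual_ball N) f
    & fapp f (x *m P) = opnorm N P].

Definition num_norming_pairs (N : vec -> R) (P : op) (c : nat) : Prop :=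
  exists s : seq (vec * fct),
    uniq s /\ size s = c /\
    forall x f, (x, f) \in s <-> norming_pair N P x f.

Definition CM_supported (N : vec -> R) (Y : op) (l : nat) : Prop :=
  exists (x : 'I_l -> vec) (f : 'I_l -> fct) (alpha : 'I_l -> R) (P0 : op),
    [/\ forall i, extreme (unit_ball N) (x i) /\ extreme (dual_ball N) (f i),
        forall i, 0 < alpha i,
        (\sum_i alpha i) = 1,
        (Y *m (\sum_i alpha i *: tens (x i) (f i))%R <= Y)%MS
      & Pmin N Y P0 /\ forall i, fapp (f i) (x i *m P0) = opnorm N P0].

Definition affdim (S : set op) (d : nat) : Prop :=
  exists A0 : op, S A0 /\
  exists W : 'M[R]_(n * n),
    [/\ forall A, S A -> (mxvec (A - A0) <= W)%MS,
        forall W' : 'M[R]_(n * n),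
          (forall A, S A -> (mxvec (A - A0) <= W')%MS) -> (W <= W')%MS
      & \rank W = d].

End Defs.

(* Main.v *)
Require Import Defs.
From HB Require Import structures.
From mathcomp Require Import all_boot all_order all_algebra.
From mathcomp Require Import all_classical all_reals.
From mathcomp Require Import ring lra zify.
Set Implicit Arguments. Unset Strict Implicit. Unset Printing Implicit Defensive.
Import Order.TTheory GRing.Theory Num.Theory.
Local Open Scope ring_scope.

Section Fapp.
Variable R : realType.

Lemma fappE n (f : 'cV[R]_n) x : fapp f x = \sum_j x 0 j * f j 0.
Proof. by rewrite /fapp mxE. Qed.

Lemma fappDl n (f : 'cV[R]_n) x y : fapp f (x + y) = fapp f x + fapp f y.
Proof. by rewrite /fapp mulmxDl mxE. Qed.
Lemma fappZl n (f : 'cV[R]_n) a x : fapp f (a *: x) = a * fapp f x.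
Proof. by rewrite /fapp -scalemxAl mxE. Qed.
Lemma fappNl n (f : 'cV[R]_n) x : fapp f (- x) = - fapp f x.
Proof. by rewrite -scaleN1r fappZl mulN1r. Qed.
Lemma fappBl n (f : 'cV[R]_n) x y : fapp f (x - y) = fapp f x - fapp f y.
Proof. by rewrite fappDl fappNl. Qed.
Lemma fapp0l n (f : 'cV[R]_n) : fapp f 0 = 0.
Proof. by rewrite /fapp mul0mx mxE. Qed.
Lemma fappDr n (f g : 'cV[R]_n) x : fapp (f + g) x = fapp f x + fapp g x.
Proof. by rewrite /fapp mulmxDr mxE. Qed.
Lemma fappZr n (f : 'cV[R]_n) a x : fapp (a *: f) x = a * fapp f x.
Proof. by rewrite /fapp -scalemxAr mxE. Qed.
Lemma fappNr n (f : 'cV[R]_n) x : fapp (- f) x = - fapp f x.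
Proof. by rewrite -scaleN1r fappZr mulN1r. Qed.
Lemma fappBr n (f g : 'cV[R]_n) x : fapp (f - g) x = fapp f x - fapp g x.
Proof. by rewrite fappDr fappNr. Qed.
Lemma fapp0r n (x : 'rV[R]_n) : fapp 0 x = 0.
Proof. by rewrite /fapp mulmx0 mxE. Qed.
Lemma fapp_suml n (f : 'cV[R]_n) I (r : seq I) (P : pred I) (F : I -> 'rV_n) :
  fapp f (\sum_(i <- r | P i) F i) = \sum_(i <- r | P i) fapp f (F i).
Proof. by rewrite /fapp mulmx_suml summxE. Qed.
Lemma fapp_sumr n (x : 'rV[R]_n) I (r : seq I) (P : pred I) (F : I -> 'cV_n) :
  fapp (\sum_(i <- r | P i) F i) x = \sum_(i <- r | P i) fapp (F i) x.
Proof. by rewrite /fapp mulmx_sumr summxE. Qed.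

Lemma sqsum_pos n (b : 'rV[R]_n) : b != 0 -> 0 < fapp b^T b.
Proof.
move=> bn0; rewrite fappE.
have [j bj] : exists j, b 0 j != 0.
  apply/existsP; apply: contraR bn0 => /existsPn H; apply/eqP/rowP => j.
  by rewrite mxE; apply/eqP; move: (H j); rewrite negbK.
rewrite (bigD1 j) //= ltr_pwDl //.
  by rewrite mxE -expr2 exprn_even_gt0.

by apply: sumr_ge0 => i _; rewrite mxE -expr2 sqr_ge0.
Qed.

Definition cone n q (a : 'I_q -> 'rV[R]_n) (b : 'rV_n) :=
  exists mu : 'I_q -> R, (forall i, 0 <= mu i) /\ b = \sum_i mu i *: a i.

Lemma farkas n q (a : 'I_q -> 'rV[R]_n) b : ~ cone a b ->
  exists y : 'cV_n, (forall i, fapp y (a i) <= 0) /\ 0 < fapp y b.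
Proof.
elim: q a b => [|q IH] a b ncone.
  have bn0 : b != 0.
    apply/eqP => b0; apply: ncone; exists (fun _ => 0); split => // .
    by rewrite big_ord0.
  by exists b^T; split; [case| exact: sqsum_pos].
have wl : forall i : 'I_q, widen_ord (leqnSn q) i = lift ord_max i.
  by move=> i; apply: val_inj; rewrite /= /bump leqNgt ltn_ord.
pose a' := fun i : 'I_q => a (widen_ord (leqnSn q) i).
pose al := a ord_max.
have nc' : ~ cone a' b.
  move=> [mu [mu0 eq]]; apply: ncone.
  exists (fun i => if unlift ord_max i is Some j then mu j else 0); split.
    by move=> i; case: (unlift _ _).
  rewrite big_ord_recr /= unlift_none scale0r addr0 eq.
  by apply: eq_bigr => i _; rewrite {1}wl liftK.
have [y [ya yb]] := IH a' b nc'.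
case: (lerP (fapp y al) 0) => hc.
  exists y; split => // i; case: (unliftP ord_max i) => [j ->|->] //.
  by rewrite -wl; apply: ya.
set c := fapp y al in hc.
pose a'' := fun i => c *: a' i - fapp y (a' i) *: al.
pose b'' := c *: b - fapp y b *: al.
have nc'' : ~ cone a'' b''.
  move=> [mu [mu0 eq]]; apply: ncone.
  pose S := \sum_i mu i * fapp y (a' i).
  pose k := (fapp y b - S) / c.
  have k0 : 0 <= k.
    apply: divr_ge0; last exact: ltW.
    rewrite subr_ge0; apply: (le_trans _ (ltW yb)).
    by apply: sumr_le0 => i _; apply: mulr_ge0_le0.
  exists (fun i => if unlift ord_max i is Some j then mu j else k); split.
    by move=> i; case: (unlift _ _).
  rewrite big_ord_recr /= unlift_none.
  have -> : \sum_(i < q) (if unlift ord_max (widen_ord (leqnSn q) i) is Some j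
      then mu j else k) *: a (widen_ord (leqnSn q) i) = \sum_i mu i *: a' i.
    by apply: eq_bigr => i _; rewrite {1}wl liftK.
  have cn0 : c != 0 by rewrite gt_eqF.
  apply: (@scalerI _ _ c) => //.
  have ck : c * k = fapp y b - S by rewrite /k mulrC divfK.
  have e1 : c *: b = b'' + fapp y b *: al by rewrite /b'' subrK.
  have e2 : \sum_i mu i *: a'' i = \sum_i c *: (mu i *: a' i) - S *: al.
    rewrite /S scaler_suml -sumrB; apply: eq_bigr => i _.
    by rewrite /a'' scalerBr !scalerA [mu i * c]mulrC.
  rewrite e1 eq scalerDr scaler_sumr scalerA ck scalerBl e2.
  by rewrite [RHS]addrA [LHS]addrAC.
have [y' [ya' yb']] := IH a'' b'' nc''.
pose z := y' - (fapp y' al / c) *: y.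
have cn0 : c != 0 by rewrite gt_eqF.
have zE v : fapp z v = (c * fapp y' v - fapp y' al * fapp y v) / c.
  rewrite /z fappBr fappZr; field; exact: cn0.
exists z; split.
  move=> i; case: (unliftP ord_max i) => [j ->|->].
    rewrite -wl zE; apply: mulr_le0_ge0; last by rewrite invr_ge0 ltW.
    move: (ya' j); rewrite /a'' fappBl !fappZl mulrC (mulrC (fapp y (a' j))).
    by rewrite /a'.
  by rewrite zE -/al -/c [c * _]mulrC subrr mul0r.
rewrite zE; apply: divr_gt0 => //.
by move: yb'; rewrite /b'' fappBl !fappZl mulrC (mulrC (fapp y b)).
Qed.

End Fapp.

Section Gen.
Variable R : realType.

Lemma fin_argmin (I : finType) (P : pred I) (F : I -> R) :
  (exists i, P i) -> exists i0, P i0 /\ forall i, P i -> F i0 <= F i.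
Proof.
case=> i Pi; case: (arg_minP F Pi) => j Pj H; exists j; split => //.
Qed.

Lemma fin_minpos (I : finType) (P : pred I) (F : I -> R) :
  (forall i, P i -> 0 < F i) -> exists2 d, 0 < d & forall i, P i -> d <= F i.
Proof.
move=> H; have [[i Pi]|nP] := pselect (exists i, P i).
  have [j [Pj Hj]] := fin_argmin F (ex_intro _ i Pi).
  by exists (F j); [apply: H|].
exists 1 => // i Pi; case: nP; by exists i.
Qed.
End Gen.

Section Norm.
Variables (R : realType) (n : nat) (N : 'rV[R]_n -> R).
Hypothesis hN : is_norm N.

Lemma Ntri x y : N (x + y) <= N x + N y. Proof. by have [H _ _] := hN; apply: H. Qed.
Lemma NZ a x : N (a *: x) = `|a| * N x. Proof. by have [_ H _] := hN; apply: H. Qed.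
Lemma Ndef x : N x = 0 -> x = 0. Proof. by have [_ _ H] := hN; apply: H. Qed.
Lemma N0 : N 0 = 0.
Proof. by rewrite -(scale0r (0 : 'rV_n)) NZ normr0 mul0r. Qed.
Lemma NN x : N (- x) = N x.
Proof. by rewrite -scaleN1r NZ normrN normr1 mul1r. Qed.
Lemma Nge0 x : 0 <= N x.
Proof.
have := Ntri x (- x); rewrite subrr N0 NN => H.
by rewrite -(@ler_pM2l _ 2) // mulr0 mulr2n mulrDl mul1r.
Qed.
Lemma NZp a x : 0 <= a -> N (a *: x) = a * N x.
Proof. by move=> a0; rewrite NZ ger0_norm. Qed.

Lemma Nsum I (r : seq I) (P : pred I) (w : I -> R) (F : I -> 'rV_n) :
  (forall i, P i -> 0 <= w i) ->
  N (\sum_(i <- r | P i) w i *: F i) <= \sum_(i <- r | P i) w i * N (F i).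
Proof.
move=> w0; elim/big_rec2: _ => [|i y1 y2 Pi Hy]; first by rewrite N0.
by apply: (le_trans (Ntri _ _)); rewrite NZp ?w0 // lerD2l.
Qed.

Lemma Nsum' I (r : seq I) (P : pred I) (F : I -> 'rV_n) :
  N (\sum_(i <- r | P i) F i) <= \sum_(i <- r | P i) N (F i).
Proof.
elim/big_rec2: _ => [|i y1 y2 Pi Hy]; first by rewrite N0.
by apply: (le_trans (Ntri _ _)); rewrite lerD2l.
Qed.

Lemma dual_abs f x : dual_ball N f -> `|fapp f x| <= N x.
Proof.
move=> /= df; have [/Ndef ->|nz] := eqVneq (N x) 0; first by rewrite fapp0l normr0 N0.
have Np : 0 < N x by rewrite lt_neqAle eq_sym nz Nge0.
have := df ((N x)^-1 *: x); rewrite NZp ?invr_ge0 ?Nge0 // mulVf // lexx => /(_ isT).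
by rewrite fappZl normrM ger0_norm ?invr_ge0 ?Nge0 // ler_pdivrMl // mulr1.
Qed.

Lemma dual_le f x : dual_ball N f -> fapp f x <= N x.
Proof. by move=> df; apply: le_trans (dual_abs x df); apply: ler_norm. Qed.

End Norm.

Section Poly.
Variables (R : realType) (n : nat) (N : 'rV[R]_n -> R) (s : seq 'rV[R]_n).
Hypothesis hN : is_norm N.
Hypothesis hs : forall x, N x <= 1 <-> in_conv_hull s x.

Lemma sum_delta_r (M : nat) (V : lmodType R) (F : 'I_M -> V) i :
  \sum_j (j == i)%:R *: F j = F i.
Proof.
rewrite (bigD1 i) //= eqxx scale1r big1 ?addr0 // => j /negbTE ->.
by rewrite scale0r.
Qed.

Lemma sum_delta_R (M : nat) i : \sum_(j < M) ((j == i)%:R : R) = 1.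
Proof. by rewrite (bigD1 i) //= eqxx big1 ?addr0 // => j /negbTE ->. Qed.

Lemma s_ball (i : 'I_(size s)) : N s`_i <= 1.
Proof.
apply/hs; exists (fun j => (j == i)%:R); split.
- by move=> j; case: (_ == _).
- exact: sum_delta_R.
- by rewrite (sum_delta_r (fun j : 'I_(size s) => s`_j)).
Qed.

Lemma w_le1 M (w : 'I_M -> R) i : (forall j, 0 <= w j) -> \sum_j w j = 1 -> w i <= 1.
Proof.
move=> w0 w1; rewrite -w1 (bigD1 i) //= lerDl; exact: sumr_ge0.
Qed.

Lemma ball_bound (A : 'M_n) x : N x <= 1 ->
  N (x *m A) <= \sum_(i < size s) N (s`_i *m A).
Proof.
move=> /hs [w [w0 w1 ->]]; rewrite mulmx_suml.
have -> : \sum_i (w i *: s`_i) *m A = \sum_i w i *: (s`_i *m A).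
  by apply: eq_bigr => i _; rewrite scalemxAl.
apply: le_trans; first by apply: (Nsum hN) => i _; apply: w0.
apply: ler_sum => i _; rewrite -[leRHS]mul1r ler_wpM2r ?(Nge0 hN) //.
exact: w_le1.
Qed.

Lemma opnorm_ub (A : 'M_n) x : N x <= 1 -> N (x *m A) <= opnorm N A.
Proof.
move=> Nx; rewrite /opnorm; apply: ub_le_sup; last by exists x.
exists (\sum_(i < size s) N (s`_i *m A)) => _ [y Ny <-].
exact: ball_bound.
Qed.

Lemma opnorm_le (A : 'M_n) c : (forall x, N x <= 1 -> N (x *m A) <= c) ->
  opnorm N A <= c.
Proof.
move=> H; apply: ge_sup.
  by exists (N (0 *m A)), 0 => //; rewrite /unit_ball /= (N0 hN) ler01.
by move=> _ [y Ny <-]; apply: H.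
Qed.

Lemma opnorm_ge0 (A : 'M_n) : 0 <= opnorm N A.
Proof.
apply: le_trans (opnorm_ub A (x := 0) _); first by rewrite mul0mx (N0 hN).
by rewrite (N0 hN) ler01.
Qed.

Lemma lambda_le (Y P : 'M_n) : is_proj Y P -> lambda N Y <= opnorm N P.
Proof.
move=> pP; rewrite /lambda; apply: ge_inf; last by exists P.
by exists 0 => _ [Q _ <-]; apply: opnorm_ge0.
Qed.

Lemma Pmin_of (Y P0 P : 'M_n) : Pmin N Y P0 -> is_proj Y P ->
  opnorm N P <= opnorm N P0 -> Pmin N Y P.
Proof.
move=> [_ e0] pP le; split => //; apply/eqP; rewrite eq_le lambda_le // andbT.
by rewrite -e0.
Qed.

Definition Smat := \matrix_(i < size s) s`_i.

Lemma span_s (x : 'rV_n) : (x <= Smat)%MS.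
Proof.
have [->|nz] := eqVneq x 0; first exact: sub0mx.
have Nz : N x != 0 by apply: contra nz => /eqP/(Ndef hN) ->.
have Np : 0 < N x by rewrite lt_neqAle eq_sym Nz (Nge0 hN).
have : N ((N x)^-1 *: x) <= 1 by rewrite NZp ?invr_ge0 ?(Nge0 hN) // mulVf.
move=> /hs [w [w0 w1 ex]].
have -> : x = (\row_i (N x * w i)) *m Smat.
  rewrite mulmx_sum_row; apply: (@scalerI _ _ (N x)^-1); first by rewrite invr_eq0.
  rewrite ex scaler_sumr; apply: eq_bigr => i _; rewrite rowK mxE scalerA.
  by rewrite mulrA mulVf // mul1r.
exact: submxMl.
Qed.

Lemma Smat_full : row_full Smat.
Proof. by rewrite -sub1mx; apply/row_subP => i; apply: span_s. Qed.

Lemma full_inj p (A : 'M[R]_(p, n)) (h : 'cV[R]_n) : row_full A -> A *m h = 0 -> h = 0.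
Proof.
move=> /row_fullP [B BA] Ah; by rewrite -[h]mul1mx -BA -mulmxA Ah mulmx0.
Qed.

Lemma s_sep (h : 'cV_n) : (forall i : 'I_(size s), fapp h s`_i = 0) -> h = 0.
Proof.
move=> H; apply: (full_inj Smat_full); apply/colP => i.
rewrite [RHS]mxE -(H i) fappE mxE; apply: eq_bigr => j _; by rewrite mxE.
Qed.

Definition E (i : 'I_(size s + size s)) : 'rV_n :=
  match fintype.split i with inl j => s`_j | inr j => - s`_j end.

Lemma E_l j : E (lshift (size s) j) = s`_j.
Proof. by rewrite /E -[lshift _ _]/(unsplit (inl _)) unsplitK. Qed.
Lemma E_r j : E (rshift (size s) j) = - s`_j.
Proof. by rewrite /E -[rshift _ _]/(unsplit (inr _)) unsplitK. Qed.

Lemma E_ball i : N (E i) <= 1.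
Proof. by rewrite /E; case: (fintype.split i) => j; rewrite ?(NN hN) s_ball. Qed.

Lemma dualE (f : 'cV_n) : dual_ball N f <-> forall i, fapp f (E i) <= 1.
Proof.
split.
  by move=> df i; apply: le_trans (dual_le hN _ df) (E_ball i).
move=> H x /hs [w [w0 w1 ->]]; rewrite fapp_suml.
apply: (le_trans (ler_norm_sum _ _ _)); rewrite -w1; apply: ler_sum => i _.
rewrite fappZl normrM ger0_norm // ler_piMr // ler_norml; apply/andP; split.
  by have := H (rshift _ i); rewrite E_r fappNl lerNl.
by have := H (lshift _ i); rewrite E_l.
Qed.


Definition Act (f : 'cV[R]_n) := [set i | fapp f (E i) == 1].
Definition Am (f : 'cV[R]_n) : 'M_(size s + size s, n) :=
  \matrix_i (if i \in Act f then E i else 0).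

Lemma AmE f (h : 'cV_n) i :
  (Am f *m h) i 0 = if i \in Act f then fapp h (E i) else 0.
Proof.
rewrite mxE; case: ifP => Hi.
  by rewrite fappE; apply: eq_bigr => j _; rewrite mxE Hi.
by apply: big1 => j _; rewrite mxE Hi mxE mul0r.
Qed.

Lemma Am0 f (h : 'cV_n) :
  (forall i, i \in Act f -> fapp h (E i) = 0) -> Am f *m h = 0.
Proof.
move=> H; apply/colP => i; rewrite AmE [RHS]mxE; by case: ifP => // /H.
Qed.

Lemma Am0' f (h : 'cV_n) i : Am f *m h = 0 -> i \in Act f -> fapp h (E i) = 0.
Proof. by move=> H Hi; have := AmE f h i; rewrite H Hi mxE. Qed.

Lemma nz_ker p (A : 'M[R]_(p, n)) : ~~ row_full A ->
  exists h : 'cV_n, h != 0 /\ A *m h = 0.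
Proof.
move=> nf.
have : (0 < \rank (kermx A^T))%N.
  rewrite mxrank_ker mxrank_tr subn_gt0 ltn_neqAle rank_leq_col andbT.
  exact: nf.
rewrite lt0n mxrank_eq0 => nz0.
have [i ri] : exists i, row i (kermx A^T) != 0.
  apply/existsP; rewrite -negb_forall; apply: contra nz0 => /forallP H.
  by apply/eqP/row_matrixP => i; rewrite row0; apply/eqP; exact: H i.
exists (row i (kermx A^T))^T; split; first by rewrite trmx_eq0.
apply: trmx_inj; rewrite trmx_mul trmxK trmx0 -row_mul mulmx_ker.
by apply/rowP => j; rewrite !mxE.
Qed.

Lemma ext_full f : extreme (dual_ball N) f -> row_full (Am f).
Proof.
move=> [df ext]; apply/negP => /negP /nz_ker [h [hn0 Ah]].
have df' := (dualE f).1 df.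
have Hin i : i \notin Act f -> fapp f (E i) < 1.
  by move=> Hi; rewrite lt_neqAle df' andbT; move: Hi; rewrite inE.
have [e e0 He] : exists2 e : R, 0 < e & forall i, i \notin Act f ->
    e * (`|fapp h (E i)| + 1) <= 1 - fapp f (E i).
  have Fpos : forall i, (i \notin Act f) ->
      0 < (1 - fapp f (E i)) / (`|fapp h (E i)| + 1).
    move=> i /= Hi; apply: divr_gt0; first by rewrite subr_gt0 Hin.
    by rewrite ltr_wpDl.
  have [e e0 He] := fin_minpos Fpos.
  exists e => // i Hi; rewrite -ler_pdivlMr ?ltr_wpDl //; exact: He.
have key i (c : R) : `|c| <= 1 -> fapp (f + (c * e) *: h) (E i) <= 1.
  move=> c1; rewrite fappDr fappZr.
  have [Hi|Hi] := boolP (i \in Act f).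
    by rewrite (Am0' Ah Hi) mulr0 addr0 df'.
  have := He i Hi; have hn := normr_ge0 (fapp h (E i)).
  have : c * fapp h (E i) <= `|fapp h (E i)|.
    apply: le_trans (ler_norm _) _; rewrite normrM -[leRHS]mul1r.
    by rewrite ler_wpM2r.
  move=> H1 H2; rewrite mulrC mulrA; nra.
have d1 : dual_ball N (f + (1 * e) *: h) by apply/dualE => i; apply: key; rewrite normr1.
have d2 : dual_ball N (f + (-1 * e) *: h) by apply/dualE => i; apply: key; rewrite normrN normr1.
have h2 : 0 < (2^-1 : R) < 1 by apply/andP; split; lra.
have eqf : f = 2^-1 *: (f + (1 * e) *: h) + (1 - 2^-1) *: (f + (-1 * e) *: h).
  by apply/colP => i; rewrite !mxE; field.
move: (ext _ _ _ d1 d2 h2 eqf) => /colP H; apply/negP: hn0; apply/negPn/eqP/colP => i.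
have := H i; rewrite !mxE => Hi.
have : e * h i 0 = 0 by lra.
by move/eqP; rewrite mulf_eq0 gt_eqF //= => /eqP ->.
Qed.


Lemma full_ext f : dual_ball N f -> row_full (Am f) -> extreme (dual_ball N) f.
Proof.
move=> df rf; split => // y z t dy dz /andP[t0 t1] eqf.
have dy' := (dualE y).1 dy; have dz' := (dualE z).1 dz.
apply/eqP; rewrite -subr_eq0; apply/eqP; apply: (full_inj rf); apply: Am0 => i.
rewrite inE eqf fappDr !fappZr => /eqP H1; rewrite fappBr.
have := dy' i; have := dz' i => h1 h2.
have : fapp y (E i) = 1 by nra.
have : fapp z (E i) = 1 by nra.
by move=> -> ->; rewrite subrr.
Qed.

Lemma full_uniq f g : row_full (Am f) ->
  (forall i, i \in Act f -> fapp g (E i) = 1) -> g = f.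
Proof.
move=> rf H; apply/eqP; rewrite -subr_eq0; apply/eqP; apply: (full_inj rf).
apply: Am0 => i Hi; rewrite fappBr H //; move: Hi; rewrite inE => /eqP ->.
by rewrite subrr.
Qed.

Lemma vertex_step f u : dual_ball N f -> ~~ row_full (Am f) ->
  exists g, [/\ dual_ball N g, fapp f u <= fapp g u &
    (#|~: Act g| < #|~: Act f|)%N].
Proof.
move=> df nrf; have df' := (dualE f).1 df.
have [h [hn0 Ah]] := nz_ker nrf.
pose h' := if 0 <= fapp h u then h else - h.
have h'n0 : h' != 0 by rewrite /h'; case: ifP => _; rewrite ?oppr_eq0.
have Ah' : Am f *m h' = 0 by rewrite /h'; case: ifP => _; rewrite ?mulmxN Ah ?oppr0.
have h'u : 0 <= fapp h' u.
  rewrite /h'; case: ifP => // /negbT; rewrite -ltNge fappNr oppr_ge0; exact: ltW.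
have [j hj] : exists j : 'I_(size s), fapp h' s`_j != 0.
  case: (pselect (exists j : 'I_(size s), fapp h' s`_j != 0)) => // nj; exfalso.
  move/negP: h'n0; apply; apply/eqP; apply: s_sep => j.
  by apply/eqP/negPn/negP => Hj; apply: nj; exists j.
have exP : exists i, 0 < fapp h' (E i).
  case: (ltrgtP (fapp h' s`_j) 0) => Hj; last by rewrite Hj eqxx in hj.
    by exists (rshift _ j); rewrite E_r fappNl oppr_gt0.
  by exists (lshift _ j); rewrite E_l.
have [i0 [Pi0 Hi0]] := fin_argmin
  (fun i => (1 - fapp f (E i)) / fapp h' (E i)) exP.
have notact i : 0 < fapp h' (E i) -> i \notin Act f.
  by move=> Hp; apply/negP => Hi; move: Hp; rewrite (Am0' Ah' Hi) ltxx.
set t := (1 - fapp f (E i0)) / fapp h' (E i0).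
have t0 : 0 <= t.
  rewrite /t divr_ge0 ?subr_ge0 ?df' //; exact: ltW.
exists (f + t *: h'); split.
- apply/dualE => i; rewrite fappDr fappZr.
  have [Hp|Hp] := ltP 0 (fapp h' (E i)).
    have := Hi0 i Hp; rewrite -/t ler_pdivlMr // => H; lra.
  have := df' i; have : t * fapp h' (E i) <= 0 by apply: mulr_ge0_le0.
  move=> H1 H2; lra.
- rewrite fappDr fappZr lerDl; exact: mulr_ge0.
- apply: proper_card; apply/properP; split.
    apply/fintype.subsetP => i; rewrite !inE; apply: contra => /eqP Hi.
    have Hi' : i \in Act f by rewrite inE Hi.
    by rewrite fappDr fappZr (Am0' Ah' Hi') mulr0 addr0 Hi.
  exists i0; first by rewrite inE notact.
  by rewrite finset.in_setC negbK inE fappDr fappZr /t (divfK (lt0r_neq0 Pi0)) addrC subrK.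
Qed.

Lemma vertex f u : dual_ball N f -> exists g,
  [/\ dual_ball N g, row_full (Am g) & fapp f u <= fapp g u].
Proof.
move=> df; move: {2}#|~: Act f| (leqnn #|~: Act f|) => k.
elim: k f df => [|k IH] f df Hk; case: (boolP (row_full (Am f))) => [rf|nrf].
- by exists f.
- by have [g [_ _ cg]] := vertex_step u df nrf; move: cg; rewrite ltnNge (leq_trans Hk).
- by exists f.
have [g [dg fg cg]] := vertex_step u df nrf.
have [g' [dg' rg' gg']] := IH g dg (leq_trans (leq_trans cg Hk) (leqnn _)).
  by exists g'; split => //; apply: le_trans gg'.
Qed.


Lemma supp u : exists f, dual_ball N f /\ N u <= fapp f u.
Proof.
have [->|nz] := eqVneq u 0.
  exists 0; split; last by rewrite (N0 hN) fapp0l.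
  by apply/dualE => i; rewrite fapp0r ler01.
have Nz : N u != 0 by apply: contra nz => /eqP/(Ndef hN) ->.
have Np : 0 < N u by rewrite lt_neqAle eq_sym Nz (Nge0 hN).
set v := (N u)^-1 *: u.
have Nv : N v = 1 by rewrite NZp ?invr_ge0 ?(Nge0 hN) // mulVf.
have uv : u = N u *: v by rewrite /v scalerA divff // scale1r.
have nc : ~ cone (fun i => E i - v) v.
  move=> [mu [mu0 eq]].
  set S := \sum_i mu i.
  have S0 : 0 <= S by apply: sumr_ge0.
  have e1 : (1 + S) *: v = \sum_i mu i *: E i.
    rewrite scalerDl scale1r {1}eq.
    have -> : \sum_i mu i *: (E i - v) = \sum_i mu i *: E i - S *: v.
      by rewrite /S scaler_suml -sumrB; apply: eq_bigr => i _; rewrite scalerBr.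
    by rewrite subrK.
  have : N ((1 + S) *: v) <= S.
    rewrite e1; apply: le_trans; first by apply: (Nsum hN) => i _; apply: mu0.
    apply: ler_sum => i _; rewrite -[leRHS]mulr1 ler_wpM2l //; exact: E_ball.
  by rewrite (NZp hN) ?Nv ?mulr1 => [H|]; lra.
have [y [ya yb]] := farkas nc.
set c := fapp y v in yb.
exists (c^-1 *: y); split.
  apply/dualE => i; rewrite fappZr ler_pdivrMl // mulr1.
  by have := ya i; rewrite fappBl subr_le0.
by rewrite fappZr {2}uv fappZl mulrCA mulVf ?gt_eqF // mulr1.
Qed.

Lemma supp_ext u : exists g, extreme (dual_ball N) g /\ N u <= fapp g u.
Proof.
have [f [df fu]] := supp u; have [g [dg rg fg]] := vertex u df.
by exists g; split; [exact: full_ext | exact: le_trans fg].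
Qed.

Definition pickf (S : {set 'I_(size s + size s)}) : 'cV[R]_n :=
  match pselect (exists f, extreme (dual_ball N) f /\ Act f = S) with
  | left H => projT1 (cid H)
  | right _ => 0
  end.

Lemma pickfP f : extreme (dual_ball N) f -> pickf (Act f) = f.
Proof.
move=> ef; rewrite /pickf; case: pselect => [H|H]; last first.
  by exfalso; apply: H; exists f.
case: (cid H) => g [eg Ag] /=; symmetry; apply: (full_uniq (ext_full eg)) => i.
by rewrite Ag inE => /eqP.
Qed.

End Poly.

Section Hull.
Variables (R : realType) (n : nat) (s : seq 'rV[R]_n).
Local Notation M := (size s).

Definition hullS (S : {set 'I_M}) (x : 'rV[R]_n) : Prop :=
  exists w : 'I_M -> R, [/\ forall i, 0 <= w i, forall i, i \notin S -> w i = 0,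
    \sum_i w i = 1 & x = \sum_i w i *: s`_i].

Lemma hullT x : in_conv_hull s x <-> hullS finset.setT x.
Proof.
split; first by move=> [w [w0 w1 ->]]; exists w; split => // i; rewrite inE.
by move=> [w [w0 _ w1 ->]]; exists w.
Qed.

Lemma hull_mono (S S' : {set 'I_M}) x : S \subset S' -> hullS S x -> hullS S' x.
Proof.
move=> sub [w [w0 wS w1 ->]]; exists w; split => // i iS; apply: wS.
by apply: contra iS; apply: (fintype.subsetP sub).
Qed.

Lemma sum_ite_R (w : 'I_M -> R) j :
  \sum_i (if i == j then 0 else w i) = \sum_i w i - w j.
Proof.
rewrite (bigD1 j) //= [in RHS](bigD1 j) //= eqxx add0r addrAC subrr add0r.
by apply: eq_bigr => i /negbTE ->.
Qed.

Lemma sum_ite_V (w : 'I_M -> R) j :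
  \sum_i (if i == j then 0 else w i) *: s`_i = \sum_i w i *: s`_i - w j *: s`_j.
Proof.
rewrite (bigD1 j) //= [in RHS](bigD1 j) //= eqxx scale0r add0r addrAC subrr add0r.
by apply: eq_bigr => i /negbTE ->.
Qed.

Lemma hull_rem (S : {set 'I_M}) j : hullS (S :\ j) s`_j -> forall x, hullS S x -> hullS (S :\ j) x.
Proof.
move=> [v [v0 vS v1 vE]] x [w [w0 wS w1 ->]].
have vj : v j = 0 by apply: vS; rewrite in_setD1 eqxx.
exists (fun i => (if i == j then 0 else w i) + w j * v i); split.
- by move=> i; apply: addr_ge0; [case: ifP|apply: mulr_ge0].
- move=> i; rewrite in_setD1 negb_and negbK; case: eqP => [->|ij] /= H.
    by rewrite vj mulr0 addr0.
  by rewrite wS // vS ?mulr0 ?addr0 // in_setD1 (negbTE H) andbF.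
- rewrite big_split /= sum_ite_R -mulr_sumr v1 w1; lra.
- rewrite [RHS](eq_bigr (fun i => (if i == j then 0 else w i) *: s`_i + w j *: (v i *: s`_i))).
    by rewrite big_split /= sum_ite_V -scaler_sumr -vE subrK.
  by move=> i _; rewrite scalerDl scalerA.
Qed.

Lemma point_of (w : 'I_M -> R) j : (forall i, 0 <= w i) -> \sum_i w i = 1 ->
  w j = 1 -> \sum_i w i *: s`_i = s`_j.
Proof.
move=> w0 w1 wj.
have H : forall i, i != j -> w i = 0.
  have : \sum_(i | i != j) w i = 0.
    by move: w1; rewrite (bigD1 j) //= wj => H; lra.
  by move/psumr_eq0P => H i ij; apply: H.
rewrite (bigD1 j) //= wj scale1r big1 ?addr0 // => i ij; by rewrite H // scale0r.
Qed.

Lemma hull_ext (S : {set 'I_M}) j : j \in S -> ~ hullS (S :\ j) s`_j -> extreme (hullS S) s`_j.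
Proof.
move=> jS nh; split.
  exists (fun i => (i == j)%:R); split.
  - by move=> i; case: (_ == _).
  - by move=> i iS; case: eqP => // ij; move: iS; rewrite ij jS.
  - exact: sum_delta_R.
  - by rewrite (sum_delta_r (fun i : 'I_M => s`_i)).
move=> y z t [a [a0 aS a1 ->]] [b [b0 bS b1 ->]] /andP[t0 t1] eq.
pose c i := t * a i + (1 - t) * b i.
have c0 i : 0 <= c i by rewrite /c; apply: addr_ge0; apply: mulr_ge0 => //; lra.
have c1 : \sum_i c i = 1 by rewrite /c big_split /= -!mulr_sumr a1 b1; lra.
have cE : s`_j = \sum_i c i *: s`_i.
  rewrite eq !scaler_sumr -big_split /=; apply: eq_bigr => i _.
  by rewrite !scalerA -scalerDl.
have cS i : i \notin S -> c i = 0 by move=> iS; rewrite /c aS ?bS // !mulr0 addr0.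
have cj : c j = 1.
  apply: contra_notP nh => cj.
  have cjl : c j < 1 by rewrite lt_neqAle (w_le1 j c0 c1) andbT; apply/eqP.
  have cjn : 1 - c j != 0 by rewrite subr_eq0 eq_sym; apply/eqP.
  exists (fun i => if i == j then 0 else c i / (1 - c j)); split.
  - by move=> i; case: ifP => // _; apply: divr_ge0 => //; rewrite subr_ge0 ltW.
  - move=> i; rewrite in_setD1 negb_and negbK; case: eqP => //= _ iS.
    by rewrite cS // mul0r.
  - rewrite (eq_bigr (fun i => (if i == j then 0 else c i) / (1 - c j))).
      by rewrite -mulr_suml sum_ite_R c1 divff.
    by move=> i _; case: ifP => _; rewrite ?mul0r.
  - rewrite (eq_bigr (fun i => (1 - c j)^-1 *: ((if i == j then 0 else c i) *: s`_i))).
      rewrite -scaler_sumr sum_ite_V -cE -{2}[s`_j]scale1r -scalerBl scalerA.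
      by rewrite mulVf // scale1r.
    by move=> i _; case: ifP => _; rewrite ?mul0r ?scale0r ?scaler0 // scalerA mulrC.
have aj : a j = 1.
  have := w_le1 j a0 a1; have := w_le1 j b0 b1; move: cj; rewrite /c => cj h1 h2.
  nra.
have bj : b j = 1.
  have := w_le1 j a0 a1; have := w_le1 j b0 b1; move: cj; rewrite /c => cj h1 h2.
  nra.
by rewrite (point_of a0 a1 aj) (point_of b0 b1 bj).
Qed.

Lemma hull_reduce : exists S, (forall x, hullS S x <-> hullS finset.setT x) /\
  forall j, j \in S -> extreme (hullS S) s`_j.
Proof.
suff H : forall k (S : {set 'I_M}), (#|S| <= k)%N -> (forall x, hullS S x <-> hullS finset.setT x) ->
    exists S', (forall x, hullS S' x <-> hullS finset.setT x) /\
      forall j, j \in S' -> extreme (hullS S') s`_j.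
  by apply: (H #|(finset.setT : {set 'I_M})| finset.setT).
elim=> [|k IH] S Hk HS.
  exists S; split => // j jS; move: Hk; rewrite leqn0 => /eqP/cards0_eq S0.
  by move: jS; rewrite S0 inE.
have [all|nall] := pselect (forall j, j \in S -> extreme (hullS S) s`_j).
  by exists S.
move/existsNP: nall => [j /not_implyP [jS ne]].
have hj : hullS (S :\ j) s`_j.
  by apply: contra_notP ne; apply: hull_ext.
apply: (IH (S :\ j)).
  by move: Hk; rewrite (cardsD1 j S) jS add1n ltnS.
move=> x; split => [/(hull_mono (subD1set S j))/HS //|/HS].
exact: hull_rem hj x.
Qed.

End Hull.

Section LinRepr.
Variable R : realType.
Lemma lin_repr p q (F : 'rV[R]_p -> 'rV[R]_q) :
  (forall a u v, F (a *: u + v) = a *: F u + F v) ->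
  forall z, z *m (\matrix_i F (delta_mx 0 i)) = F z.
Proof.
move=> H z.
have F0 : F 0 = 0.
  have := H 1 0 0; rewrite !scale1r addr0 => /(congr1 (fun x => x - F 0)).
  by rewrite subrr addrK => <-.
have FD u v : F (u + v) = F u + F v by have := H 1 u v; rewrite !scale1r.
have FZ a u : F (a *: u) = a *: F u by rewrite -[a *: u]addr0 H F0 addr0.
rewrite mulmx_sum_row {2}(row_sum_delta z).
elim/big_rec2: _ => [|i y1 y2 _ ->]; first by rewrite F0.
by rewrite FD FZ rowK.
Qed.
End LinRepr.

Section Lin.
Variables (R : realType) (n : nat) (Y : 'M[R]_n).
Local Notation k := (\rank Y).
Definition Zk := kermx Y^T.
Local Notation r := (\rank Zk).
Definition Yb : 'M[R]_(k, n) := row_base Y.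
Definition K1 : 'M[R]_(n, r) := (row_base Zk)^T.
Definition Dm (M : 'M[R]_(r, k)) : 'M[R]_n := K1 *m M *m Yb.

Lemma Yb_sub : (Yb <= Y)%MS. Proof. by rewrite /Yb eq_row_base. Qed.
Lemma sub_Yb m (A : 'M_(m, n)) : (A <= Y)%MS -> (A <= Yb)%MS.
Proof. by rewrite /Yb eq_row_base. Qed.

Lemma YK1 : Y *m K1 = 0.
Proof.
apply: trmx_inj; rewrite trmx_mul /K1 trmxK trmx0; apply/eqP.
by rewrite -sub_kermx -/Zk eq_row_base.
Qed.

Lemma YbK1 : Yb *m K1 = 0.
Proof. by rewrite -(mulmxKpV Yb_sub) -!mulmxA YK1 !mulmx0. Qed.

Lemma r_eq : r = (n - k)%N.
Proof. by rewrite /Zk mxrank_ker mxrank_tr. Qed.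

Lemma DA (u : 'rV_n) : u *m K1 = 0 -> (u <= Y)%MS.
Proof.
move=> uK.
have Zu : Zk *m u^T = 0.
  have rbu : row_base Zk *m u^T = 0 by apply: trmx_inj; rewrite trmx_mul trmxK trmx0.
  have sZ : (Zk <= row_base Zk)%MS by rewrite eq_row_base.
  by rewrite -(mulmxKpV sZ) -mulmxA rbu mulmx0.
have uK' : (u <= kermx Zk^T)%MS.
  by rewrite sub_kermx; apply/eqP/trmx_inj; rewrite trmx_mul trmxK Zu trmx0.
have YK' : (Y <= kermx Zk^T)%MS.
  rewrite sub_kermx; apply/eqP/trmx_inj; rewrite trmx_mul trmxK trmx0.
  exact: mulmx_ker.
have rk : \rank (kermx Zk^T) = k.
  by rewrite mxrank_ker mxrank_tr r_eq subKn // rank_leq_col.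
have := mxrank_leqif_eq YK' => [[_]]; rewrite rk eqxx => /esym/andP[_ KY].
exact: submx_trans uK' KY.
Qed.

Lemma D_sub M : (Dm M <= Y)%MS.
Proof. by apply: submx_trans Yb_sub; apply: submxMl. Qed.

Lemma YD M : Y *m Dm M = 0.
Proof. by rewrite /Dm !mulmxA YK1 !mul0mx. Qed.

Lemma Yb_inv : exists C, Yb *m C = 1%:M.
Proof. by apply/row_freeP; apply: row_base_free. Qed.

Lemma K1_inv : exists B, B *m K1 = 1%:M.
Proof.
have [B HB] : exists B, row_base Zk *m B = 1%:M.
  by apply/row_freeP; apply: row_base_free.
by exists B^T; rewrite /K1 -trmx_mul HB trmx1.
Qed.

Lemma D_inj M : Dm M = 0 -> M = 0.
Proof.
move=> DM; have [C HC] := Yb_inv; have [B HB] := K1_inv.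
have e : B *m Dm M *m C = M.
  by rewrite /Dm [B *m _]mulmxA [B *m _]mulmxA HB mul1mx -mulmxA HC mulmx1.
by rewrite -e DM mulmx0 mul0mx.
Qed.

Lemma D_surj (X : 'M[R]_n) : (X <= Y)%MS -> Y *m X = 0 -> exists M, X = Dm M.
Proof.
move=> XY YX.
have XYb := sub_Yb XY.
set X' := X *m pinvmx Yb.
have XE : X = X' *m Yb by rewrite /X' mulmxKpV.
have YX' : Y *m X' = 0.
  have [C HC] := Yb_inv.
  have e1 : Y *m X' = Y *m X' *m Yb *m C.
    by rewrite -(mulmxA (Y *m X') Yb C) HC mulmx1.
  by rewrite e1 -(mulmxA Y X' Yb) -XE YX !mul0mx.
have X'Z : (X'^T <= row_base Zk)%MS.
  rewrite eq_row_base /Zk sub_kermx -trmx_mul YX' trmx0 //.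
exists (X'^T *m pinvmx (row_base Zk))^T.
by rewrite /Dm /K1 -trmx_mul (mulmxKpV X'Z) trmxK -XE.
Qed.

Lemma projD P M : is_proj Y P -> is_proj Y (P + Dm M).
Proof.
move=> [PY Px]; split; first by apply: addmx_sub => //; apply: D_sub.
move=> x xY; rewrite mulmxDr Px //.
have -> : x *m Dm M = 0.
  by rewrite -(mulmxKpV xY) -(mulmxA (x *m pinvmx Y)) YD mulmx0.
by rewrite addr0.
Qed.

Lemma proj_diff P Q : is_proj Y P -> is_proj Y Q ->
  (Q - P <= Y)%MS /\ Y *m (Q - P) = 0.
Proof.
move=> [PY Px] [QY Qx]; split.
  by apply: addmx_sub => //; rewrite -scaleN1r; apply: scalemx_sub.
apply/row_matrixP => i; rewrite row_mul mulmxBr Px ?Qx ?row_sub // row0 subrr //.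
Qed.

Lemma tr_zero M (T : 'M[R]_n) : (Y *m T <= Y)%MS -> \tr (Dm M *m T) = 0.
Proof.
move=> YT.
have YbT : (Yb *m T <= Yb)%MS.
  apply: sub_Yb; apply: submx_trans YT; exact: submxMr Yb_sub.
set G := Yb *m T *m pinvmx Yb.
have YbTE : Yb *m T = G *m Yb by rewrite /G mulmxKpV.
have -> : Dm M *m T = K1 *m M *m G *m Yb.
  by rewrite /Dm -(mulmxA (K1 *m M) Yb T) YbTE (mulmxA (K1 *m M) G Yb).
rewrite mxtrace_mulC (mulmxA Yb (K1 *m M) G) (mulmxA Yb K1 M) YbK1.
by rewrite !mul0mx mxtrace0.
Qed.

Lemma fapp_tr (f : 'cV[R]_n) x (A : 'M_n) : fapp f (x *m A) = \tr (A *m tens x f).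
Proof.
by rewrite /tens mulmxA mxtrace_mulC /mxtrace big_ord1 mulmxA.
Qed.

Local Notation p := (r * k)%N.
Definition Dv (z : 'rV[R]_p) := Dm (vec_mx z).
Definition Lm : 'M[R]_(p, n * n) := \matrix_i mxvec (Dv (delta_mx 0 i)).

Lemma Dv_lin a u v : Dv (a *: u + v) = a *: Dv u + Dv v.
Proof.
by rewrite /Dv /Dm linearP mulmxDr mulmxDl -scalemxAr -scalemxAl.
Qed.

Lemma Lm_E z : z *m Lm = mxvec (Dv z).
Proof.
apply: (lin_repr (F := fun z => mxvec (Dv z))) => a u v.
by rewrite Dv_lin linearP.
Qed.

Lemma Lm_free : row_free Lm.
Proof.
rewrite -kermx_eq0; apply/eqP/row_matrixP => i; rewrite row0.
set u := row i (kermx Lm).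
have : u *m Lm = 0 by rewrite /u -row_mul mulmx_ker row0.
rewrite Lm_E => /eqP; rewrite mxvec_eq0 => /eqP /D_inj V0.
by rewrite -[u]vec_mxK V0 linear0.
Qed.

End Lin.

Lemma minW (R : fieldType) q (Q : 'M[R]_q -> Prop) : Q 1%:M ->
  (forall A B, Q A -> Q B -> Q (A :&: B)%MS) ->
  exists W, Q W /\ forall W', Q W' -> (W <= W')%MS.
Proof.
move=> Q1 Qcap.
pose P r := `[< exists W, Q W /\ \rank W = r >].
have exP : exists r, P r by exists (\rank (1%:M : 'M[R]_q)); apply/asboolP; exists 1%:M.
case: (ex_minnP exP) => r0 /asboolP [W [QW rW]] Hmin.
exists W; split => // W' QW'.
have Hc : Q (W :&: W')%MS by apply: Qcap.
have : (r0 <= \rank (W :&: W')%MS)%N by apply: Hmin; apply/asboolP; exists (W :&: W')%MS.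
rewrite -rW => le.
have := mxrank_leqif_eq (capmxSl W W') => [[_]].
have -> : \rank (W :&: W')%MS == \rank W.
  by rewrite eqn_leq le andbT; apply: mxrankS; apply: capmxSl.
move=> /esym /andP [_ WC]; exact: submx_trans WC (capmxSr _ _).
Qed.

Lemma nz_row (R : fieldType) a b (A : 'M[R]_(a, b)) : A != 0 -> exists i, row i A != 0.
Proof.
move=> nz0; apply/existsP; rewrite -negb_forall; apply: contra nz0 => /forallP H.
by apply/eqP/row_matrixP => i; rewrite row0; apply/eqP; exact: H i.
Qed.

Lemma rank_lt (R : fieldType) p m (A : 'M[R]_(p, m)) (g : 'cV_m) :
  g != 0 -> A *m g = 0 -> (\rank A < m)%N.
Proof.
move=> gn0 Ag.
have sub : (g^T <= kermx A^T)%MS by rewrite sub_kermx -trmx_mul Ag trmx0.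
have := mxrankS sub; rewrite mxrank_ker mxrank_tr.
have : (0 < \rank g^T)%N by rewrite lt0n mxrank_eq0 trmx_eq0.
move=> h1 h2; have := leq_trans h1 h2; rewrite subn_gt0 //.
Qed.

Lemma col_row_mx (R : comPzRingType) a b (c : 'cV[R]_a) (rw : 'rV[R]_b) i j :
  (c *m rw) i j = c i 0 * rw 0 j.
Proof. by rewrite mxE big_ord1. Qed.

Lemma row_delta_col (R : comPzRingType) a b (u : 'rV[R]_a) (v : 'cV[R]_b) i j :
  (u *m delta_mx i j *m v) 0 0 = u 0 i * v j 0.
Proof.
rewrite -(mul_delta_mx (0 : 'I_1)) mulmxA -colE -mulmxA -rowE.
by rewrite col_row_mx !mxE.
Qed.

Section Main.
Variables (R : realType) (n : nat) (N : 'rV[R]_n -> R) (Y : 'M[R]_n)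
  (s : seq 'rV[R]_n).
Hypothesis hN : is_norm N.
Hypothesis hs : forall x, N x <= 1 <-> in_conv_hull s x.
Local Notation DmY := (@Dm R n Y).
Local Notation DvY := (@Dv R n Y).
Local Notation LmY := (@Lm R n Y).

Lemma tr_sum l (x : 'I_l -> 'rV_n) (f : 'I_l -> 'cV_n) (al : 'I_l -> R) (A : 'M_n) :
  \tr (A *m \sum_i al i *: tens (x i) (f i)) = \sum_i al i * fapp (f i) (x i *m A).
Proof.
rewrite mulmx_sumr; elim/big_rec2: _ => [|i y1 y2 _ IH]; first by rewrite mxtrace0.
by rewrite mxtraceD IH -scalemxAr mxtraceZ fapp_tr.
Qed.

Lemma ext_ball x : extreme (unit_ball N) x -> N x <= 1.
Proof. by case. Qed.
Lemma ext_dual f : extreme (dual_ball N) f -> dual_ball N f.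
Proof. by case. Qed.

Lemma pair_le (x : 'rV_n) f (A : 'M_n) : N x <= 1 -> dual_ball N f ->
  fapp f (x *m A) <= opnorm N A.
Proof.
move=> Nx df; apply: le_trans (dual_le hN _ df) _; exact: opnorm_ub.
Qed.

Variables (l : nat) (x : 'I_l -> 'rV[R]_n) (f : 'I_l -> 'cV[R]_n)
  (al : 'I_l -> R) (P0 : 'M[R]_n).
Hypotheses (hext : forall i, extreme (unit_ball N) (x i) /\ extreme (dual_ball N) (f i))
  (hal : forall i, 0 < al i) (hsum : \sum_i al i = 1)
  (hinv : (Y *m (\sum_i al i *: tens (x i) (f i)) <= Y)%MS)
  (hP0 : Pmin N Y P0) (hnorm : forall i, fapp (f i) (x i *m P0) = opnorm N P0).
Local Notation T := (\sum_i al i *: tens (x i) (f i)).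

Lemma Pmin_diff A : Pmin N Y A -> exists M, A - P0 = DmY M.
Proof.
move=> [pA _]; have [pP0 _] := hP0.
have [h1 h2] := proj_diff pP0 pA; exact: D_surj.
Qed.

Lemma Pmin_norm A : Pmin N Y A -> opnorm N A = opnorm N P0.
Proof. by move=> [_ ->]; case: hP0 => _ ->. Qed.

Lemma cm_all A : Pmin N Y A -> forall j, fapp (f j) (x j *m A) = opnorm N A.
Proof.
move=> PA.
have [M AM] := Pmin_diff PA.
have trA : \tr (A *m T) = \tr (P0 *m T).
  have -> : A = P0 + DmY M by rewrite -AM addrC subrK.
  by rewrite mulmxDl mxtraceD tr_zero // addr0.
have sP0 : \sum_i al i * fapp (f i) (x i *m P0) = opnorm N P0.
  rewrite (eq_bigr (fun i => al i * opnorm N P0)); last by move=> i _; rewrite hnorm.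
  by rewrite -mulr_suml hsum mul1r.
move: trA; rewrite !tr_sum sP0 -(Pmin_norm PA) => HA.
have le i : fapp (f i) (x i *m A) <= opnorm N A.
  by have [e1 e2] := hext i; apply: pair_le; [apply: ext_ball | apply: ext_dual].
have : \sum_i al i * (opnorm N A - fapp (f i) (x i *m A)) = 0.
  rewrite (eq_bigr (fun i => al i * opnorm N A - al i * fapp (f i) (x i *m A))).
    by rewrite sumrB -mulr_suml hsum mul1r HA subrr.
  by move=> i _; rewrite mulrBr.
move/psumr_eq0P => H j; apply/eqP; rewrite eq_sym -subr_eq0; apply/eqP.
have Hnn : forall i : 'I_l, true -> 0 <= al i * (opnorm N A - fapp (f i) (x i *m A)).
  by move=> i _; apply: mulr_ge0; [apply: ltW | rewrite subr_ge0].
have := H Hnn j isT.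
by move/eqP; rewrite mulf_eq0 (gt_eqF (hal j)) /= => /eqP.
Qed.

Local Notation p := (\rank (Zk Y) * \rank Y)%N.
Definition Phi : 'M[R]_(p, l) :=
  \matrix_i (\row_j fapp (f j) (x j *m DvY (delta_mx 0 i))).

Lemma Phi_E z : z *m Phi = \row_j fapp (f j) (x j *m DvY z).
Proof.
apply: (lin_repr (F := fun z => \row_j fapp (f j) (x j *m DvY z))) => a u v.
apply/rowP => j; rewrite !mxE Dv_lin mulmxDr fappDl -scalemxAr fappZl.
by [].
Qed.

Lemma upper_sub A : Pmin N Y A -> (mxvec (A - P0) <= kermx Phi *m LmY)%MS.
Proof.
move=> PA; have [M AM] := Pmin_diff PA.
have -> : A - P0 = DvY (mxvec M) by rewrite /Dv mxvecK.
rewrite -Lm_E; apply: submxMr; rewrite sub_kermx Phi_E; apply/eqP/rowP => j.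
rewrite !mxE /Dv mxvecK -AM mulmxBr fappBl (cm_all PA) hnorm (Pmin_norm PA).
by rewrite subrr.
Qed.

Lemma sum_J (V : zmodType) (J : {set 'I_l}) (F : 'I_l -> V) :
  (forall j, j \notin J -> F j = 0) -> \sum_(i < #|J|) F (enum_val i) = \sum_j F j.
Proof.
move=> H; rewrite -(big_enum_val _ (A := mem J)) big_mkcond; apply: eq_bigr => j _.
by case: ifP => // /negbT /H ->.
Qed.

Lemma rank_Phi (hmin : forall l', CM_supported N Y l' -> (l <= l')%N) :
  (l <= \rank Phi + 1)%N.
Proof.
rewrite leqNgt; apply/negP => hlt.
set K := kermx Phi^T.
set H := kermx (const_mx 1 : 'cV[R]_l).
have rK : (2 <= \rank K)%N by rewrite mxrank_ker mxrank_tr; lia.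
have rH : (l - 1 <= \rank H)%N.
  by rewrite mxrank_ker; have := rank_leq_col (const_mx 1 : 'cV[R]_l); lia.
have rcap : (0 < \rank (K :&: H)%MS)%N.
  have := mxrank_sum_cap K H; have := rank_leq_col (K + H)%MS; lia.
move: rcap; rewrite lt0n mxrank_eq0 => /nz_row [i0 nzb].
set beta := row i0 (K :&: H)%MS in nzb.
have bK : (beta <= K)%MS by apply: submx_trans (row_sub _ _) (capmxSl _ _).
have bH : (beta <= H)%MS by apply: submx_trans (row_sub _ _) (capmxSr _ _).
pose b j := beta 0 j.
have sb : \sum_j b j = 0.
  move: bH; rewrite sub_kermx => /eqP /matrixP /(_ 0 0); rewrite !mxE => H0.
  apply: (etrans _ H0); apply: eq_bigr => j _. by rewrite /b /const_mx !mxE mulr1.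
have key z : \sum_j b j * fapp (f j) (x j *m DvY z) = 0.
  move: bK; rewrite sub_kermx => /eqP bP.
  have eT : Phi *m beta^T = (beta *m Phi^T)^T by rewrite trmx_mul trmxK.
  have H0 : (z *m Phi *m beta^T) 0 0 = 0 by rewrite -mulmxA eT bP trmx0 mulmx0 mxE.
  rewrite mxE in H0; apply: (etrans _ H0); apply: eq_bigr => j _.
  rewrite Phi_E mxE [beta^T _ _]mxE mulrC. by [].
pose S := \sum_j b j *: tens (x j) (f j).
have YbSK : Yb Y *m S *m K1 Y = 0.
  apply/matrixP => a c; rewrite [RHS]mxE.
  have -> : Yb Y *m S *m K1 Y = \sum_j b j *: ((Yb Y *m f j) *m (x j *m K1 Y)).
    rewrite /S mulmx_sumr mulmx_suml; apply: eq_bigr => j _.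
    rewrite -scalemxAr -scalemxAl /tens (mulmxA (Yb Y) (f j) (x j)).
    by rewrite -(mulmxA (Yb Y *m f j) (x j) (K1 Y)).
  rewrite summxE; apply: (etrans _ (key (mxvec (delta_mx c a)))); apply: eq_bigr => j _.
  rewrite mxE col_row_mx /Dv mxvecK /Dm /fapp.
  rewrite (mulmxA (x j) (K1 Y *m delta_mx c a) (Yb Y)) (mulmxA (x j) (K1 Y) (delta_mx c a)).
  rewrite -(mulmxA (x j *m K1 Y *m delta_mx c a) (Yb Y) (f j)) row_delta_col.
  by rewrite [(Yb Y *m f j) a 0 * _]mulrC.
have YL : forall Q : 'M[R]_n, Y *m Q = Y *m pinvmx (Yb Y) *m (Yb Y *m Q).
  by move=> Q; rewrite mulmxA (mulmxKpV (sub_Yb (submx_refl Y))).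
have YS : (Y *m S <= Y)%MS.
  apply/row_subP => i; apply: DA; rewrite -row_mul.
  by rewrite YL -mulmxA YbSK mulmx0 row0.
have [j1 bj1] : exists j, 0 < b j.
  case: (pselect (exists j, 0 < b j)) => // nb; exfalso.
  have b0 : forall j, b j = 0.
    have H1 : \sum_j (- b j) = 0 by rewrite sumrN sb oppr0.
    have H2 : forall j, true -> 0 <= - b j.
      move=> j _; rewrite oppr_ge0 leNgt; apply/negP => bj; apply: nb; by exists j.
    move=> j; have := (psumr_eq0P H2 H1) j isT.
    by move/eqP; rewrite oppr_eq0 => /eqP.
  move/negP: nzb; apply; apply/eqP/rowP => j; rewrite [RHS]mxE; exact: b0 j.
have [j0 [Pj0 Hj0]] := fin_argmin (P := fun j => 0 < b j) (fun j => al j / b j) (ex_intro _ j1 bj1).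
set t := al j0 / b j0.
have t0 : 0 < t by rewrite divr_gt0.
pose al' j := al j - t * b j.
have al'0 j : 0 <= al' j.
  rewrite /al' subr_ge0; case: (ltP 0 (b j)) => bj.
    by have := Hj0 j bj; rewrite -/t ler_pdivlMr.
  have : t * b j <= 0 by apply: mulr_ge0_le0 => //; exact: ltW.
  move=> h; have := hal j; lra.
have al'j0 : al' j0 = 0 by rewrite /al' /t divfK ?subrr // lt0r_neq0.
have sal' : \sum_j al' j = 1 by rewrite /al' sumrB hsum -mulr_sumr sb mulr0 subr0.
pose J := [set j | 0 < al' j].
have cJ : (#|J| < l)%N.
  have : J \proper (finset.setT : {set 'I_l}).
    apply/properP; split; first exact: finset.subsetT.
    by exists j0; [rewrite finset.in_setT | rewrite inE al'j0 ltxx].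
  by move/proper_card; rewrite cardsT card_ord.
have offJ j : j \notin J -> al' j = 0.
  by rewrite inE -leNgt => h; apply/eqP; rewrite eq_le h al'0.
have CM : CM_supported N Y #|J|.
  exists (fun i => x (enum_val i)), (fun i => f (enum_val i)),
    (fun i => al' (enum_val i)), P0; split.
  - by move=> i; apply: hext.
  - by move=> i; have := enum_valP i; rewrite inE.
  - by rewrite (sum_J (F := al') offJ).
  - rewrite (sum_J (F := fun j => al' j *: tens (x j) (f j))); last first.
      by move=> j /offJ ->; rewrite scale0r.
    have -> : \sum_j al' j *: tens (x j) (f j) = T - t *: S.
      rewrite /S scaler_sumr -sumrB; apply: eq_bigr => j _.
      by rewrite /al' scalerBl scalerA.
    rewrite mulmxBr; apply: addmx_sub => //.
    rewrite -scaleN1r; apply: scalemx_sub; rewrite -scalemxAr; exact: scalemx_sub.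
  - by split => // i; apply: hnorm.
by have := hmin _ CM; rewrite leqNgt cJ.
Qed.

End Main.

Lemma extreme_ext (R : realType) (V : lmodType R) (C C' : set V) e :
  (forall y, C y <-> C' y) -> extreme C e -> extreme C' e.
Proof.
move=> H [Ce He]; split; first exact/H.
by move=> y z t /H Cy /H Cz; apply: He.
Qed.

Section Local.
Variables (R : realType) (n : nat) (N : 'rV[R]_n -> R) (s : seq 'rV[R]_n).
Hypothesis hN : is_norm N.
Hypothesis hs : forall x, N x <= 1 <-> in_conv_hull s x.

Lemma local_opt (P D : 'M[R]_n) :
  (forall e g, norming_pair N P e g -> fapp g (e *m D) = 0) ->
  exists2 t, 0 < t & opnorm N (P + t *: D) <= opnorm N P.
Proof.
move=> HD; set lam := opnorm N P.
have [S [HS Sext]] := hull_reduce s.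
have ballS y : N y <= 1 <-> hullS S y.
  by split => [/hs/hullT/HS //|/HS/hullT/hs].
have ext_s i : i \in S -> extreme (unit_ball N) s`_i.
  by move=> iS; apply: extreme_ext (Sext i iS) => y; split => /ballS.
pose F (q : 'I_(size s) * {set 'I_(size s + size s)}) :=
  lam - fapp (pickf N q.2) (s`_(q.1) *m P).
have Fpos : forall q : 'I_(size s) * {set 'I_(size s + size s)}, (fapp (pickf N q.2) (s`_(q.1) *m P) < lam) -> 0 < F q.
  by move=> q; rewrite /F subr_gt0.
have [d d0 Hd] := fin_minpos Fpos.
set C := \sum_(i < size s) N (s`_i *m D) + 1.
have C0 : 0 < C.
  by rewrite /C ltr_wpDl //; apply: sumr_ge0 => i _; apply: (Nge0 hN).
have NC (i : 'I_(size s)) : N (s`_i *m D) <= C.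
  rewrite /C (bigD1 i) //= -addrA lerDl addr_ge0 //.
  by apply: sumr_ge0 => j _; apply: (Nge0 hN).
exists (d / C); first exact: divr_gt0.
set t := d / C.
have tC : t * C = d by rewrite /t divfK // gt_eqF.
have t0 : 0 <= t by apply: ltW; exact: divr_gt0.
have core (i : 'I_(size s)) : i \in S -> N (s`_i *m (P + t *: D)) <= lam.
  move=> iS; have [g [eg Ng]] := supp_ext hN hs (s`_i *m (P + t *: D)).
  apply: le_trans Ng _.
  rewrite mulmxDr fappDl -scalemxAr fappZl.
  have dg : dual_ball N g by case: eg.
  have gP : fapp g (s`_i *m P) <= lam.
    apply: le_trans (dual_le hN _ dg) _; apply: (opnorm_ub hN hs); exact: (s_ball hs).
  have gD : fapp g (s`_i *m D) <= C by apply: le_trans (dual_le hN _ dg) (NC i).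
  case: (ltP (fapp g (s`_i *m P)) lam) => [lt|ge].
    have := Hd (i, Act s g) ; rewrite /F /= (pickfP hN hs eg) => /(_ lt) h.
    have : t * fapp g (s`_i *m D) <= t * C by apply: ler_wpM2l.
    rewrite tC => h2; lra.
  have eq : fapp g (s`_i *m P) = lam by apply/eqP; rewrite eq_le gP ge.
  by rewrite HD ?mulr0 ?addr0 ?eq //; split => //; apply: ext_s.
apply: (opnorm_le hN) => y /ballS [w [w0 wS w1 ->]].
rewrite mulmx_suml.
have -> : \sum_i (w i *: s`_i) *m (P + t *: D) = \sum_i w i *: (s`_i *m (P + t *: D)).
  by apply: eq_bigr => i _; rewrite scalemxAl.
apply: le_trans; first by apply: (Nsum hN) => i _; apply: w0.
rewrite -[lam]mul1r -w1 mulr_suml; apply: ler_sum => i _.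
have [iS|iS] := boolP (i \in S); first by apply: ler_wpM2l => //; apply: core.
by rewrite wS // !mul0r.
Qed.
End Local.

Section Lower.
Variables (R : realType) (n : nat) (N : 'rV[R]_n -> R) (Y : 'M[R]_n)
  (s : seq 'rV[R]_n).
Hypothesis hN : is_norm N.
Hypothesis hs : forall x, N x <= 1 <-> in_conv_hull s x.
Local Notation DmY := (@Dm R n Y).
Local Notation DvY := (@Dv R n Y).
Local Notation LmY := (@Lm R n Y).
Variables (l : nat) (x : 'I_l -> 'rV[R]_n) (f : 'I_l -> 'cV[R]_n)
  (al : 'I_l -> R) (P0 : 'M[R]_n).
Hypotheses (hext : forall i, extreme (unit_ball N) (x i) /\ extreme (dual_ball N) (f i))
  (hal : forall i, 0 < al i) (hsum : \sum_i al i = 1)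
  (hinv : (Y *m (\sum_i al i *: tens (x i) (f i)) <= Y)%MS)
  (hP0 : Pmin N Y P0) (hnorm : forall i, fapp (f i) (x i *m P0) = opnorm N P0).
Variables (P : 'M[R]_n) (m : nat) (L : seq ('rV[R]_n * 'cV[R]_n)).
Hypotheses (hP : Pmin N Y P) (hLs : size L = m)
  (hL : forall e g, (e, g) \in L <-> norming_pair N P e g).
Local Notation p := (\rank (Zk Y) * \rank Y)%N.
Local Notation d0 := ((0 : 'rV[R]_n), (0 : 'cV[R]_n)).

Definition Psi : 'M[R]_(p, m) :=
  \matrix_i (\row_(j < m) fapp (nth d0 L j).2 ((nth d0 L j).1 *m DvY (delta_mx 0 i))).

Lemma Psi_E z : z *m Psi = \row_(j < m) fapp (nth d0 L j).2 ((nth d0 L j).1 *m DvY z).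
Proof.
apply: (lin_repr (F := fun z => \row_(j < m) fapp (nth d0 L j).2 ((nth d0 L j).1 *m DvY z))).
move=> a u v; apply/rowP => j; rewrite !mxE Dv_lin mulmxDr fappDl -scalemxAr fappZl.
by [].
Qed.

Lemma cm_in_L i : (x i, f i) \in L.
Proof.
apply/hL; have [e1 e2] := hext i; split => //.
exact: (cm_all hN hs hext hal hsum hinv hP0 hnorm hP).
Qed.

Definition idx i := index (x i, f i) L.
Lemma idx_lt i : (idx i < m)%N.
Proof. by rewrite -hLs index_mem cm_in_L. Qed.
Lemma nth_idx i : nth d0 L (idx i) = (x i, f i).
Proof. by rewrite nth_index // cm_in_L. Qed.

Definition gamma : 'cV[R]_m := \col_j \sum_i (if idx i == j then al i else 0).

Lemma sum_idx (G : 'I_m -> R) i :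
  \sum_(j < m) G j * (if idx i == j then al i else 0) = al i * G (Ordinal (idx_lt i)).
Proof.
rewrite (bigD1 (Ordinal (idx_lt i))) //= eqxx big1 ?addr0 ?[_ * al i]mulrC //.
move=> j ji; case: eqP => [h|]; last by rewrite mulr0.
by exfalso; move/eqP: ji; apply; apply: val_inj; rewrite /= h.
Qed.

Lemma psi_gamma (z : 'rV[R]_p) : (z *m Psi *m gamma) 0 0 = 0.
Proof.
rewrite mxE.
have -> : \sum_j (z *m Psi) 0 j * gamma j 0 =
    \sum_i al i * fapp (f i) (x i *m DvY z).
  rewrite (eq_bigr (fun j => \sum_i (z *m Psi) 0 j * (if idx i == j then al i else 0))).
    rewrite exchange_big /=; apply: eq_bigr => i _; rewrite sum_idx Psi_E mxE /=.
    by rewrite nth_idx.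
  by move=> j _; rewrite [gamma _ _]mxE mulr_sumr.
by rewrite -tr_sum tr_zero.
Qed.

Lemma gamma_nz : gamma != 0.
Proof.
apply/negP => /eqP g0.
have : \sum_j gamma j 0 = 1.
  rewrite (eq_bigr (fun j : 'I_m => \sum_i (if idx i == j then al i else 0))); last first.
    by move=> j _; rewrite mxE.
  rewrite exchange_big /= -hsum; apply: eq_bigr => i _.
  apply: (etrans _ (etrans (sum_idx (fun _ => 1) i) (mulr1 _))).
  by apply: eq_bigr => j _; rewrite mul1r.
rewrite g0 big1 => [/eqP|j _]; last by rewrite mxE.
by rewrite eq_sym oner_eq0.
Qed.

Lemma rank_Psi : (\rank Psi < m)%N.
Proof.
apply: (rank_lt gamma_nz); apply/colP => r; rewrite [RHS]mxE.
have := psi_gamma (delta_mx 0 r); rewrite -mulmxA -rowE mxE //.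
Qed.

Lemma lower_sub (W : 'M[R]_(n * n)) :
  (forall A, Pmin N Y A -> (mxvec (A - P0) <= W)%MS) ->
  forall z : 'rV[R]_p, (z <= kermx Psi)%MS -> (z *m LmY <= W)%MS.
Proof.
move=> QW z zK.
have zP : z *m Psi = 0 by apply/eqP; rewrite -sub_kermx.
set D := DvY z.
have HD : forall e g, norming_pair N P e g -> fapp g (e *m D) = 0.
  move=> e g np; have eL := (hL e g).2 np.
  have jm : (index (e, g) L < m)%N by rewrite -hLs index_mem.
  have := congr1 (fun M : 'M[R]_(1, m) => M 0 (Ordinal jm)) zP; rewrite Psi_E !mxE /=.
  by rewrite nth_index.
have [t t0 Ht] := local_opt hN hs HD.
have tD : t *: D = DmY (t *: vec_mx z).
  by rewrite /D /Dv /Dm -scalemxAr -scalemxAl.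
have Pt : Pmin N Y (P + t *: D).
  apply: (Pmin_of hN hs hP) => //; rewrite ?(Pmin_norm hP0 hP) //.
    by rewrite tD; apply: projD; case: hP.
have h1 := QW _ Pt; have h2 := QW _ hP.
have : (mxvec (P + t *: D - P0) - mxvec (P - P0) <= W)%MS.
  by apply: addmx_sub => //; rewrite -scaleN1r; apply: scalemx_sub.
have e : P + t *: D - P0 - (P - P0) = t *: D.
  by apply/matrixP => a b; rewrite !mxE; ring.
rewrite -linearB /= e linearZ /= -Lm_E => h.
have tn0 : t != 0 by rewrite gt_eqF.
by rewrite -[z *m LmY]scale1r -(mulVf tn0) -scalerA; apply: scalemx_sub.
Qed.

End Lower.

Unset Implicit Arguments. Set Strict Implicit.

Theorem mainTheorem10 (R : realType) (n k : nat) (N : 'rV[R]_n -> R)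
    (Y : 'M[R]_n) (l m : nat) :
  is_norm N -> polyhedral N ->
  \rank Y = k -> (1 <= k)%N -> (k <= n - 1)%N ->
  (* l: minimal number of pairs supporting a Chalmers-Metcalf operator for Y *)
  CM_supported N Y l ->
  (forall l', CM_supported N Y l' -> (l <= l')%N) ->
  (* m: minimal number of norming pairs of a minimal projection onto Y *)
  (exists P, Pmin N Y P /\ num_norming_pairs N P m) ->
  (forall P c, Pmin N Y P -> num_norming_pairs N P c -> (m <= c)%N) ->
  exists d : nat, affdim (Pmin N Y) d /\
    ((k * (n - k))%:Z - m%:Z + 1 <= d%:Z)%R /\
    (d%:Z <= (k * (n - k))%:Z - l%:Z + 1)%R.
Proof.
move=> hN [s hs] rkY k1 kn CM hminl [P [hP [L [uL [sL hL]]]]] hminm.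
have [x [f [al [P0 [hext hal hsum hinv [hP0 hnorm]]]]]] := CM.
pose Q (W : 'M[R]_(n * n)) := forall A, Pmin N Y A -> (mxvec (A - P0) <= W)%MS.
have [W [QW Wmin]] : exists W, Q W /\ forall W', Q W' -> (W <= W')%MS.
  apply: minW; first by move=> A _; apply: submx1.
  by move=> A B QA QB C PC; rewrite sub_capmx QA ?QB.
exists (\rank W); split.
  by exists P0; split => //; exists W; split.
have hL' : forall e g, (e, g) \in L <-> norming_pair N P e g by move=> e g; apply: hL.
have up1 : (W <= <<kermx (Phi Y x f) *m Lm Y>>)%MS.
  apply: Wmin => A PA; rewrite genmxE.
  exact: (upper_sub hN hs hext hal hsum hinv hP0 hnorm PA).
have up2 := mxrankS up1; rewrite mxrank_gen in up2.
have up3 := mxrankM_maxl (kermx (Phi Y x f)) (Lm Y).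
have up4 := rank_Phi hext hal hsum hinv hP0 hnorm hminl.
have up5 := rank_leq_row (Phi Y x f).
rewrite mxrank_ker in up3.
have lo1 : (kermx (Psi Y m L) *m Lm Y <= W)%MS.
  apply/row_subP => i; rewrite row_mul.
  apply: (lower_sub hN hs hP sL hL' QW).
  exact: row_sub.
have lo2 := mxrankS lo1.
rewrite mxrankMfree ?Lm_free // mxrank_ker in lo2.
have lo3 := rank_Psi hN hs hext hal hsum hinv hP0 hnorm hP sL hL'.
have lo4 := rank_leq_row (Psi Y m L).
have rr := r_eq Y.
move: (leq_trans up2 up3) up4 up5 lo2 lo3 lo4 rr rkY kn k1.
move: (\rank (Phi Y x f)) => a.
move: (\rank (Psi Y m L)) => b.
move: (\rank W) => d.
move: (\rank (Zk Y)) => r.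
move: (\rank Y) => y.
move=> H1 H2 H3 H4 H5 H6 H7 H8 H9 H10.
subst y; subst r.
have pE : ((n - k) * k)%N = (k * (n - k))%N by rewrite mulnC.
rewrite pE in H1 H3 H4 H6.
move: H1 H2 H3 H4 H5 H6; set p := (k * (n - k))%N => H1 H2 H3 H4 H5 H6.
split; lia.
Qed.
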